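(* Let $X=\varprojlim X_np_n$ be a reduced regular projective limit of vector lattices $(X_n,\le_n)$. For every additive positive function $a\colon X\to\mathbb R$ there exist $n_a\in\mathbb N$ and additive positive functions $a_n\colon X_n\to\mathbb R$, $n\ge n_a$, such that $a(x)=a_n(\operatorname{pr}_nx)$ for all $x\in X$ and all $n\ge n_a$. Conversely, if $a_n\colon X_n\to\mathbb R$ is additive and positive, then $a:=a_n\circ\operatorname{pr}_n$ is an additive positive function on $X$. The same statements hold with ''additive positive'' replaced by ''difference of two additive positive functions''.
   Context: All vector spaces are real. Let $(X_n,\le_n)_{n\in\mathbb N}$ be ordered vector spaces and $p_n\colon X_{n+1}\to X_n$ positive linear maps. The projective limit $X=\varprojlim X_np_n$ is the vector subspace $\{x=(x_n)\in\prod_nX_n:\ x_n=p_n(x_{n+1})\ \text{for all }n\}$ with the coordinatewise order; $\operatorname{pr}_nx=x_n$. It is regular if all $X_n$ are vector lattices and each $p_n$ preserves suprema of finite sets, and reduced if $\operatorname{pr}_nX=X_n$ for all $n$. A function $a$ between additive semigroups is additive if $a(x_1+x_2)=a(x_1)+a(x_2)$; a function $a$ between ordered vector spaces is positive if $a(x)\ge0$ whenever $x\ge0$. *)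

(* Defs.v *)
From Stdlib Require Import Reals List.
Open Scope R_scope.
Set Implicit Arguments.

Record OVS := {
  car :> Type;
  vzero : car;
  vadd : car -> car -> car;
  vopp : car -> car;
  vscal : R -> car -> car;
  vle : car -> car -> Prop;
  vaddA : forall x y z, vadd x (vadd y z) = vadd (vadd x y) z;
  vaddC : forall x y, vadd x y = vadd y x;
  vadd0 : forall x, vadd x vzero = x;
  vaddN : forall x, vadd x (vopp x) = vzero;
  vscal1 : forall x, vscal 1 x = x;
  vscalA : forall s t x, vscal s (vscal t x) = vscal (s * t) x;
  vscalDr : forall t x y, vscal t (vadd x y) = vadd (vscal t x) (vscal t y);
  vscalDl : forall s t x, vscal (s + t) x = vadd (vscal s x) (vscal t x);
  vle_refl : forall x, vle x x;
  vle_antisym : forall x y, vle x y -> vle y x -> x = y;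
  vle_trans : forall x y z, vle x y -> vle y z -> vle x z;
  vle_add : forall x y z, vle x y -> vle (vadd x z) (vadd y z);
  vle_scal : forall t x y, 0 <= t -> vle x y -> vle (vscal t x) (vscal t y)
}.

Record PosLin (A B : OVS) := {
  pl_fun :> car A -> car B;
  pl_add : forall x y, pl_fun (vadd A x y) = vadd B (pl_fun x) (pl_fun y);
  pl_scal : forall t x, pl_fun (vscal A t x) = vscal B t (pl_fun x);
  pl_pos : forall x, vle A (vzero A) x -> vle B (vzero B) (pl_fun x)
}.

Definition is_sup (V : OVS) (S : list (car V)) (s : car V) : Prop :=
  (forall y, In y S -> vle V y s) /\
  (forall u, (forall y, In y S -> vle V y u) -> vle V s u).

Definition is_vector_lattice (V : OVS) : Prop :=
  forall x y : car V, exists s, is_sup V (x :: y :: nil) s.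

Definition preserves_finite_sups (A B : OVS) (p : car A -> car B) : Prop :=
  forall (S : list (car A)) (s : car A), S <> nil ->
    is_sup A S s -> is_sup B (map p S) (p s).

Definition plim (X : nat -> OVS) (p : forall n, PosLin (X (S n)) (X n)) : Type :=
  { x : forall n, car (X n) | forall n, x n = p n (x (S n)) }.

Definition pr (X : nat -> OVS) (p : forall n, PosLin (X (S n)) (X n))
  (n : nat) (x : plim X p) : car (X n) := proj1_sig x n.

Definition plim_add (X : nat -> OVS) (p : forall n, PosLin (X (S n)) (X n))
  (x y : plim X p) : plim X p.
Proof.
  refine (exist _ (fun n => vadd (X n) (proj1_sig x n) (proj1_sig y n)) _).
  intro n. rewrite (pl_add (p n)). rewrite <- (proj2_sig x n), <- (proj2_sig y n).
  reflexivity.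
Defined.

Definition plim_nonneg (X : nat -> OVS) (p : forall n, PosLin (X (S n)) (X n))
  (x : plim X p) : Prop := forall n, vle (X n) (vzero (X n)) (proj1_sig x n).

Definition is_regular (X : nat -> OVS) (p : forall n, PosLin (X (S n)) (X n)) : Prop :=
  (forall n, is_vector_lattice (X n)) /\
  (forall n, @preserves_finite_sups (X (S n)) (X n) (pl_fun (p n))).

Definition is_reduced (X : nat -> OVS) (p : forall n, PosLin (X (S n)) (X n)) : Prop :=
  forall n (y : car (X n)), exists x : plim X p, pr n x = y.

Definition additive {T : Type} (add : T -> T -> T) (a : T -> R) : Prop :=
  forall x1 x2, a (add x1 x2) = a x1 + a x2.

Definition positive {T : Type} (nonneg : T -> Prop) (a : T -> R) : Prop :=
  forall x, nonneg x -> 0 <= a x.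

Definition add_pos {T : Type} (add : T -> T -> T) (nonneg : T -> Prop) (a : T -> R) :=
  additive add a /\ positive nonneg a.

Definition diff_add_pos {T : Type} (add : T -> T -> T) (nonneg : T -> Prop) (a : T -> R) :=
  exists b c, add_pos add nonneg b /\ add_pos add nonneg c /\ forall x, a x = b x - c x.

Definition addV (V : OVS) := vadd V.
Definition nonnegV (V : OVS) (x : car V) : Prop := vle V (vzero V) x.

(* Main.v *)
Require Import Defs.
From Stdlib Require Import Reals Arith Lia Lra List.
From Stdlib Require Import Classical ClassicalEpsilon FunctionalExtensionality ProofIrrelevance.
Open Scope R_scope.

Lemma v_idem0 (V : OVS) (x : car V) : vadd V x x = x -> x = vzero V.
Proof.
  intro H. rewrite <- (vaddN V x). rewrite <- H at 2.
  rewrite <- vaddA, vaddN, vadd0. reflexivity.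
Qed.

Lemma v0l (V : OVS) (x : car V) : vadd V (vzero V) x = x.
Proof. rewrite vaddC, vadd0. reflexivity. Qed.

Lemma vopp0 (V : OVS) : vopp V (vzero V) = vzero V.
Proof. rewrite <- (v0l V (vopp V (vzero V))). apply vaddN. Qed.

Lemma vsub_eq (V : OVS) (x y : car V) : vadd V y (vadd V x (vopp V y)) = x.
Proof.
  rewrite (vaddC V x), vaddA, vaddN, v0l. reflexivity.
Qed.

Lemma vle_sub (V : OVS) (x y : car V) : vle V x y -> vle V (vzero V) (vadd V y (vopp V x)).
Proof.
  intro H. rewrite <- (vaddN V x). apply vle_add. exact H.
Qed.

Lemma vle_add_nonneg (V : OVS) (x y : car V) :
  vle V (vzero V) y -> vle V x (vadd V x y).
Proof.
  intro H. rewrite <- (vadd0 V x) at 1. rewrite (vaddC V x (vzero V)), (vaddC V x y).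
  apply vle_add. exact H.
Qed.

Lemma vnonneg_add (V : OVS) (x y : car V) :
  vle V (vzero V) x -> vle V (vzero V) y -> vle V (vzero V) (vadd V x y).
Proof.
  intros Hx Hy. eapply vle_trans. exact Hx. apply vle_add_nonneg. exact Hy.
Qed.

Lemma pl_zero (A B : OVS) (f : PosLin A B) : f (vzero A) = vzero B.
Proof.
  apply v_idem0. rewrite <- pl_add, vadd0. reflexivity.
Qed.

Lemma sup_unique (V : OVS) (S : list (car V)) s1 s2 :
  is_sup V S s1 -> is_sup V S s2 -> s1 = s2.
Proof.
  intros [H1 H1'] [H2 H2']. apply vle_antisym; [apply H1' | apply H2']; assumption.
Qed.

Lemma sup_self (V : OVS) (y : car V) : vle V (vzero V) y -> is_sup V (y :: vzero V :: nil) y.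
Proof.
  intro H. split.
  - intros z [<-|[<-|[]]]. apply vle_refl. exact H.
  - intros u Hu. apply Hu. left; reflexivity.
Qed.

Lemma plim_eq {X : nat -> OVS} {p : forall n, PosLin (X (S n)) (X n)} (x y : plim X p) :
  (forall n, proj1_sig x n = proj1_sig y n) -> x = y.
Proof.
  destruct x as [x hx], y as [y hy]; simpl; intro H.
  assert (x = y) by (apply functional_extensionality_dep; exact H). subst y.
  f_equal. apply proof_irrelevance.
Qed.

Definition plim_zero (X : nat -> OVS) (p : forall n, PosLin (X (S n)) (X n)) : plim X p.
Proof.
  refine (exist _ (fun n => vzero (X n)) _). intro n. symmetry. apply pl_zero.
Defined.

Lemma vopp_unique (V : OVS) (a b : car V) : vadd V a b = vzero V -> b = vopp V a.
Proof.
  intro H. rewrite <- (v0l V b). rewrite <- (vaddN V a). rewrite (vaddC V a (vopp V a)).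
  rewrite <- vaddA, H, vadd0. reflexivity.
Qed.

Lemma pl_opp (A B : OVS) (f : PosLin A B) x : f (vopp A x) = vopp B (f x).
Proof.
  apply vopp_unique. rewrite <- pl_add, vaddN. apply pl_zero.
Qed.

Definition plim_opp {X : nat -> OVS} {p : forall n, PosLin (X (S n)) (X n)} (x : plim X p) : plim X p.
Proof.
  refine (exist _ (fun n => vopp (X n) (proj1_sig x n)) _).
  intro n. rewrite (proj2_sig x n) at 1. symmetry. apply pl_opp.
Defined.

Lemma plim_down {X : nat -> OVS} {p : forall n, PosLin (X (S n)) (X n)} (x : plim X p) n :
  pr n x = vzero (X n) -> forall k, (k <= n)%nat -> pr k x = vzero (X k).
Proof.
  intros H k Hk. induction n as [|n IH].
  - assert (k = 0%nat) by lia. subst. exact H.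
  - destruct (Nat.eq_dec k (S n)) as [->|Hne]. exact H.
    apply IH; [|lia]. unfold pr in *. rewrite (proj2_sig x n), H. apply pl_zero.
Qed.

Lemma a_zero {X : nat -> OVS} {p : forall n, PosLin (X (S n)) (X n)} (a : plim X p -> R) :
  additive (@plim_add X p) a -> a (plim_zero X p) = 0.
Proof.
  intro Ha. assert (E : plim_add (plim_zero X p) (plim_zero X p) = plim_zero X p).
  { apply plim_eq. intro n. simpl. apply vadd0. }
  pose proof (Ha (plim_zero X p) (plim_zero X p)) as H. rewrite E in H. lra.
Qed.

Lemma a_split {X : nat -> OVS} {p : forall n, PosLin (X (S n)) (X n)} (a : plim X p -> R) (x y : plim X p) :
  additive (@plim_add X p) a -> a x = a y + a (plim_add x (plim_opp y)).
Proof.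
  intro Ha. rewrite <- Ha. f_equal. apply plim_eq. intro n. simpl. symmetry. apply vsub_eq.
Qed.

Definition posc {X : nat -> OVS} (Hl : forall n, is_vector_lattice (X n)) n (v : car (X n)) : car (X n) :=
  proj1_sig (constructive_indefinite_description _ (Hl n v (vzero (X n)))).

Lemma posc_spec {X : nat -> OVS} (Hl : forall n, is_vector_lattice (X n)) n v :
  is_sup (X n) (v :: vzero (X n) :: nil) (posc Hl n v).
Proof. unfold posc. exact (proj2_sig (constructive_indefinite_description _ _)). Qed.

Definition plim_pos {X : nat -> OVS} {p : forall n, PosLin (X (S n)) (X n)}
  (Hreg : is_regular X p) (x : plim X p) : plim X p.
Proof.
  refine (exist _ (fun n => posc (proj1 Hreg) n (proj1_sig x n)) _).
  intro n. apply (sup_unique (X n) (proj1_sig x n :: vzero (X n) :: nil)).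
  apply posc_spec.
  assert (Hne : proj1_sig x (S n) :: vzero (X (S n)) :: nil <> nil) by discriminate.
  pose proof (proj2 Hreg n _ _ Hne (posc_spec (proj1 Hreg) (S n) (proj1_sig x (S n)))) as H.
  simpl in H. rewrite pl_zero, <- (proj2_sig x n) in H. exact H.
Defined.

Lemma plim_pos_nonneg {X : nat -> OVS} {p : forall n, PosLin (X (S n)) (X n)}
  (Hreg : is_regular X p) (x : plim X p) : plim_nonneg (plim_pos Hreg x).
Proof.
  intro n. simpl. apply (proj1 (posc_spec (proj1 Hreg) n (proj1_sig x n))). right; left; reflexivity.
Qed.

Lemma plim_pos_ge {X : nat -> OVS} {p : forall n, PosLin (X (S n)) (X n)}
  (Hreg : is_regular X p) (x : plim X p) :
  plim_nonneg (plim_add (plim_pos Hreg x) (plim_opp x)).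
Proof.
  intro n. simpl. apply vle_sub. apply (proj1 (posc_spec (proj1 Hreg) n (proj1_sig x n))). left; reflexivity.
Qed.

Lemma plim_pos_id {X : nat -> OVS} {p : forall n, PosLin (X (S n)) (X n)}
  (Hreg : is_regular X p) (x : plim X p) n :
  vle (X n) (vzero (X n)) (pr n x) -> pr n (plim_pos Hreg x) = pr n x.
Proof.
  intro H. unfold pr. simpl. eapply sup_unique. apply posc_spec. apply sup_self. exact H.
Qed.

Lemma plim_pos_zero {X : nat -> OVS} {p : forall n, PosLin (X (S n)) (X n)}
  (Hreg : is_regular X p) (x : plim X p) n :
  pr n x = vzero (X n) -> pr n (plim_pos Hreg x) = vzero (X n).
Proof.
  intro H. rewrite plim_pos_id; rewrite H; [reflexivity| apply vle_refl].
Qed.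

Lemma a_mono {X : nat -> OVS} {p : forall n, PosLin (X (S n)) (X n)} (a : plim X p -> R) (x y : plim X p) :
  add_pos (@plim_add X p) (@plim_nonneg X p) a -> plim_nonneg (plim_add x (plim_opp y)) -> a y <= a x.
Proof.
  intros [Ha Hp] H. rewrite (a_split a x y Ha). specialize (Hp _ H). lra.
Qed.

Fixpoint plim_nmul {X : nat -> OVS} {p : forall n, PosLin (X (S n)) (X n)} (m : nat) (z : plim X p) : plim X p :=
  match m with 0%nat => plim_zero X p | S m => plim_add (plim_nmul m z) z end.

Lemma nmul_props {X : nat -> OVS} {p : forall n, PosLin (X (S n)) (X n)} (a : plim X p -> R) (z : plim X p) N :
  add_pos (@plim_add X p) (@plim_nonneg X p) a -> plim_nonneg z -> pr N z = vzero (X N) ->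
  forall m, plim_nonneg (plim_nmul m z) /\ pr N (plim_nmul m z) = vzero (X N) /\ a (plim_nmul m z) = INR m * a z.
Proof.
  intros [Ha Hp] Hz HN m. induction m as [|m [IH1 [IH2 IH3]]].
  - split; [|split].
    + intro n. simpl. apply vle_refl.
    + reflexivity.
    + simpl. rewrite (a_zero a Ha). ring.
  - split; [|split].
    + intro n. simpl. apply vnonneg_add. apply IH1. apply Hz.
    + unfold pr in *. simpl. rewrite IH2, HN. apply vadd0.
    + simpl plim_nmul. rewrite Ha, IH3, S_INR. ring.
Qed.

Lemma exists_u {X : nat -> OVS} {p : forall n, PosLin (X (S n)) (X n)} (Hreg : is_regular X p)
  (a : plim X p -> R) N :
  add_pos (@plim_add X p) (@plim_nonneg X p) a ->
  (exists x, pr N x = vzero (X N) /\ a x <> 0) ->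
  exists u, plim_nonneg u /\ pr N u = vzero (X N) /\ 1 <= a u.
Proof.
  intros Hap [x [Hx Hax]].
  assert (Hz : exists z, plim_nonneg z /\ pr N z = vzero (X N) /\ 0 < a z).
  { set (z1 := plim_pos Hreg x). set (z2 := plim_add z1 (plim_opp x)).
    pose proof (a_split a z1 x (proj1 Hap)) as E. fold z2 in E.
    assert (N1 : plim_nonneg z1) by apply plim_pos_nonneg.
    assert (N2 : plim_nonneg z2) by apply plim_pos_ge.
    pose proof (proj2 Hap _ N1). pose proof (proj2 Hap _ N2).
    assert (P1 : pr N z1 = vzero (X N)) by (apply plim_pos_zero; exact Hx).
    assert (P2 : pr N z2 = vzero (X N)).
    { change (vadd (X N) (pr N z1) (vopp (X N) (pr N x)) = vzero (X N)). rewrite P1, Hx, vopp0. apply vadd0. }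
    destruct (Req_dec (a z1) 0) as [E1|E1].
    - exists z2. repeat split; auto. lra.
    - exists z1. repeat split; auto. lra. }
  destruct Hz as [z [Hz1 [Hz2 Hz3]]].
  destruct (INR_unbounded (1 / a z)) as [m Hm].
  destruct (nmul_props a z N Hap Hz1 Hz2 m) as [U1 [U2 U3]].
  exists (plim_nmul m z). repeat split; auto. rewrite U3.
  apply Rlt_le. apply Rmult_lt_compat_r with (r := a z) in Hm; [|exact Hz3].
  unfold Rdiv in Hm. rewrite Rmult_1_l, Rinv_l in Hm; lra.
Qed.

Fixpoint plim_psum {X : nat -> OVS} {p : forall n, PosLin (X (S n)) (X n)} (u : nat -> plim X p) (m : nat) : plim X p :=
  match m with 0%nat => plim_zero X p | S m => plim_add (plim_psum u m) (u m) end.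

Lemma psum_stable {X : nat -> OVS} {p : forall n, PosLin (X (S n)) (X n)} (u : nat -> plim X p)
  (Hu : forall N, pr N (u N) = vzero (X N)) k m :
  (k <= m)%nat -> pr k (plim_psum u m) = pr k (plim_psum u k).
Proof.
  intro H. induction H as [|m H IH]. reflexivity.
  rewrite <- IH. pose proof (plim_down (u m) m (Hu m) k H) as E. unfold pr in *. simpl. rewrite E. apply vadd0.
Qed.

Lemma psum_mono {X : nat -> OVS} {p : forall n, PosLin (X (S n)) (X n)} (u : nat -> plim X p)
  (Hu : forall N, plim_nonneg (u N)) k m m' :
  (m <= m')%nat -> vle (X k) (pr k (plim_psum u m)) (pr k (plim_psum u m')).
Proof.
  intro H. induction H as [|m' H IH]. apply vle_refl.
  eapply vle_trans. exact IH. unfold pr. simpl. apply vle_add_nonneg. apply Hu.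
Qed.

Definition plim_lim {X : nat -> OVS} {p : forall n, PosLin (X (S n)) (X n)} (u : nat -> plim X p)
  (Hu : forall N, pr N (u N) = vzero (X N)) : plim X p.
Proof.
  refine (exist _ (fun k => pr k (plim_psum u k)) _).
  intro k. rewrite <- (psum_stable u Hu k (S k)) by lia.
  unfold pr. apply (proj2_sig (plim_psum u (S k)) k).
Defined.

Lemma a_vanish {X : nat -> OVS} {p : forall n, PosLin (X (S n)) (X n)} (Hreg : is_regular X p)
  (a : plim X p -> R) :
  add_pos (@plim_add X p) (@plim_nonneg X p) a ->
  exists na, forall x, pr na x = vzero (X na) -> a x = 0.
Proof.
  intro Hap. apply NNPP. intro Hn.
  assert (H : forall N, exists u, plim_nonneg u /\ pr N u = vzero (X N) /\ 1 <= a u).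
  { intro N. apply (exists_u Hreg a N Hap). apply NNPP. intro H2. apply Hn. exists N.
    intros x Hx. apply NNPP. intro H3. apply H2. exists x. auto. }
  set (u := fun N => proj1_sig (constructive_indefinite_description _ (H N))).
  assert (Hu : forall N, plim_nonneg (u N) /\ pr N (u N) = vzero (X N) /\ 1 <= a (u N)).
  { intro N. unfold u. exact (proj2_sig (constructive_indefinite_description _ (H N))). }
  assert (Hu0 : forall N, pr N (u N) = vzero (X N)) by (intro N; apply Hu).
  assert (Hun : forall N, plim_nonneg (u N)) by (intro N; apply Hu).
  set (w := plim_lim u Hu0).
  assert (HF : forall M, INR M <= a (plim_psum u M)).
  { induction M as [|M IH]. simpl. rewrite (a_zero a (proj1 Hap)). lra.
    simpl plim_psum. rewrite (proj1 Hap), S_INR. pose proof (proj2 (proj2 (Hu M))). lra. }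
  assert (Hw : forall M, a (plim_psum u M) <= a w).
  { intro M. apply (a_mono a w _ Hap). intro k. change (vle (X k) (vzero (X k)) (vadd (X k) (pr k (plim_psum u k)) (vopp (X k) (pr k (plim_psum u M))))). apply vle_sub.
    destruct (le_lt_dec M k) as [Hl|Hl].
    - apply (psum_mono u Hun k M k Hl).
    - rewrite (psum_stable u Hu0 k M) by lia. apply vle_refl. }
  destruct (INR_unbounded (a w)) as [M HM].
  specialize (HF M). specialize (Hw M). lra.
Qed.

Lemma factor_eq {X : nat -> OVS} {p : forall n, PosLin (X (S n)) (X n)} (a : plim X p -> R) na n :
  additive (@plim_add X p) a -> (forall x, pr na x = vzero (X na) -> a x = 0) -> (na <= n)%nat ->
  forall x y, pr n x = pr n y -> a x = a y.
Proof.
  intros Ha Hv Hn x y E. rewrite (a_split a x y Ha).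
  rewrite (Hv (plim_add x (plim_opp y))). ring.
  apply (plim_down _ n); [|exact Hn].
  change (vadd (X n) (pr n x) (vopp (X n) (pr n y)) = vzero (X n)). rewrite E. apply vaddN.
Qed.

Lemma part1 (X : nat -> OVS) (p : forall n, PosLin (X (S n)) (X n))
  (Hreg : is_regular X p) (Hred : is_reduced X p) :
  (forall a : plim X p -> R, add_pos (@plim_add X p) (@plim_nonneg X p) a ->
     exists (na : nat) (an : forall n, car (X n) -> R),
       forall n, (na <= n)%nat ->
         add_pos (addV (X n)) (nonnegV (X n)) (an n) /\
         forall x : plim X p, a x = an n (pr n x)).
Proof.
  intros a Hap. destruct (a_vanish Hreg a Hap) as [na Hv].
  set (ch := fun n y => proj1_sig (constructive_indefinite_description _ (Hred n y))).
  assert (Hch : forall n y, pr n (ch n y) = y).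
  { intros n y. unfold ch. exact (proj2_sig (constructive_indefinite_description _ (Hred n y))). }
  exists na, (fun n y => a (ch n y)). intros n Hn.
  pose proof (factor_eq a na n (proj1 Hap) Hv Hn) as F.
  split; [split|].
  - intros y1 y2. rewrite <- (proj1 Hap). apply F.
    unfold addV. rewrite Hch. change (vadd (X n) y1 y2 = vadd (X n) (pr n (ch n y1)) (pr n (ch n y2))).
    rewrite !Hch. reflexivity.
  - intros y Hy. unfold nonnegV in Hy. rewrite (F _ (plim_pos Hreg (ch n y))).
    apply (proj2 Hap). apply plim_pos_nonneg.
    rewrite plim_pos_id; rewrite Hch; [reflexivity|exact Hy].
  - intro x. apply F. rewrite Hch. reflexivity.
Qed.

Lemma part2 (X : nat -> OVS) (p : forall n, PosLin (X (S n)) (X n)) :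
  (forall (n : nat) (an : car (X n) -> R),
     add_pos (addV (X n)) (nonnegV (X n)) an ->
     add_pos (@plim_add X p) (@plim_nonneg X p) (fun x => an (pr n x))).
Proof.
  intros n an [Ha Hp]. split.
  - intros x y. apply Ha.
  - intros x Hx. apply Hp. apply Hx.
Qed.

Theorem mainTheorem2 (X : nat -> OVS) (p : forall n, PosLin (X (S n)) (X n))
  (Hreg : is_regular X p) (Hred : is_reduced X p) :
  (* additive positive functions *)
  (forall a : plim X p -> R, add_pos (@plim_add X p) (@plim_nonneg X p) a ->
     exists (na : nat) (an : forall n, car (X n) -> R),
       forall n, (na <= n)%nat ->
         add_pos (addV (X n)) (nonnegV (X n)) (an n) /\
         forall x : plim X p, a x = an n (pr n x)) /\
  (forall (n : nat) (an : car (X n) -> R),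
     add_pos (addV (X n)) (nonnegV (X n)) an ->
     add_pos (@plim_add X p) (@plim_nonneg X p) (fun x => an (pr n x))) /\
  (* differences of two additive positive functions *)
  (forall a : plim X p -> R, diff_add_pos (@plim_add X p) (@plim_nonneg X p) a ->
     exists (na : nat) (an : forall n, car (X n) -> R),
       forall n, (na <= n)%nat ->
         diff_add_pos (addV (X n)) (nonnegV (X n)) (an n) /\
         forall x : plim X p, a x = an n (pr n x)) /\
  (forall (n : nat) (an : car (X n) -> R),
     diff_add_pos (addV (X n)) (nonnegV (X n)) an ->
     diff_add_pos (@plim_add X p) (@plim_nonneg X p) (fun x => an (pr n x))).
Proof.
  split; [exact (part1 X p Hreg Hred)|].
  split; [exact (part2 X p)|].
  split.
  - intros a [b [c [Hb [Hc E]]]].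
    destruct (part1 X p Hreg Hred b Hb) as [nb [bn Hbn]].
    destruct (part1 X p Hreg Hred c Hc) as [nc [cn Hcn]].
    exists (Nat.max nb nc), (fun n y => bn n y - cn n y). intros n Hn.
    destruct (Hbn n ltac:(lia)) as [B1 B2]. destruct (Hcn n ltac:(lia)) as [C1 C2].
    split.
    + exists (bn n), (cn n). auto.
    + intro x. rewrite E, B2, C2. reflexivity.
  - intros n an [b [c [Hb [Hc E]]]].
    exists (fun x => b (pr n x)), (fun x => c (pr n x)). split; [|split].
    + apply part2; exact Hb.
    + apply part2; exact Hc.
    + intro x. apply E.
Qed.
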